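(* Let $n\ge3$ and let $c=(c_1,\ldots,c_n)\in\{0,1,2\}^n$ be a stable configuration on the wheel graph $W_n$. (1) $c$ is SSM-recurrent if and only if for all $i,j\in[n]$ (not necessarily distinct) with $c_i=c_j=0$ there exists $k\in(i,j)$ with $c_k=2$. (2) $c$ is ASM-recurrent if and only if $c$ is SSM-recurrent and there exists $i\in[n]$ with $c_i=2$. Consequently the SSM-recurrent configurations on $W_n$ are exactly the ASM-recurrent ones together with $(1,1,\ldots,1)$.
   Context: $C_n$ is the cycle on $[n]=\{1,\ldots,n\}$ with edges $\{i,i+1\}$ and $\{n,1\}$; $W_n$ is $C_n$ plus a sink vertex $0$ adjacent to all of $[n]$. Indices are taken modulo $n$, vertices $1,\ldots,n$ being arranged clockwise. For $i,j\in[n]$, $(i,j)$ denotes the open clockwise interval: the vertices strictly between $i$ and $j$ when going $i,i+1,i+2,\ldots$ (mod $n$) until $j$; if $i=j$, $(i,j):=[n]\setminus\{i\}$. Sandpile setting: configurations $c\in\mathbb{Z}_{\ge0}^n$ (no grains on the sink), stable if $c_i<\deg(i)$ for all $i\in[n]$ (on $W_n$: $c\in\{0,1,2\}^n$). ASM toppling: an unstable vertex loses $\deg(i)$ grains and sends one to each neighbour (grains to the sink vanish). SSM with parameter $p\in(0,1)$: a toppling vertex sends independently one grain to each neighbour with probability $p$, keeping it otherwise. For each model, the Markov chain on stable configurations adds one grain at a random vertex (fully supported distribution on $[n]$) and stabilises; ASM-/SSM-recurrent configurations are the recurrent states of these chains. Known characterisation: a stable $c$ is ASM-recurrent (resp.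 SSM-recurrent) iff there is an acyclic (resp. arbitrary) orientation $\mathcal O$ of the graph in which $0$ is the unique vertex with all incident edges incoming and with $c_i\ge \mathrm{in}_{\mathcal O}(i)$ for all $i\in[n]$. *)

(* Defs.v *)
From mathcomp Require Import all_boot.
From Stdlib Require Import Relations.
Set Implicit Arguments. Unset Strict Implicit. Unset Printing Implicit Defensive.

(* Vertices of the cycle [n] are 'I_n (vertex k+1 of the paper is k : 'I_n),
   clockwise successor of i is ordS i, predecessor ord_pred i.
   The sink 0 is implicit: every cycle vertex is adjacent to it, so every
   vertex of [n] has degree 3 in W_n (n >= 3). *)
Definition config (n : nat) := {ffun 'I_n -> nat}.

Definition deg_W : nat := 3.

Definition stable n (c : config n) : Prop := forall i, c i < deg_W.

Definition add_grain n (c : config n) (i : 'I_n) : config n :=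
  [ffun j => c j + (j == i)].

(* Toppling of vertex i that sends one grain to the counter-clockwise
   neighbour iff bl, to the clockwise neighbour iff br and to the sink iff bs
   (grains sent to the sink vanish); the sent grains are lost by i. *)
Definition topple n (c : config n) (i : 'I_n) (bl br bs : bool) : config n :=
  [ffun j => c j - (if j == i then bl + br + bs else 0)
             + ((j == ord_pred i) && bl) + ((j == ordS i) && br)].

Definition asm_step n (c c' : config n) : Prop :=
  exists i, deg_W <= c i /\ c' = topple c i true true true.

(* SSM toppling: an unstable vertex sends a grain to each neighbour
   independently with probability p in (0,1); as p is in (0,1) every subset
   of neighbours occurs with positive probability. *)
Definition ssm_step n (c c' : config n) : Prop :=
  exists i bl br bs, deg_W <= c i /\ c' = topple c i bl br bs.

Definition stabilises n (step : relation (config n)) (c c' : config n) : Prop :=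
  clos_refl_trans _ step c c' /\ stable c'.

(* One step of the Markov chain: add a grain at some vertex (fully supported
   distribution) and stabilise; this is the support of the transition kernel. *)
Definition chain n (step : relation (config n)) (c c' : config n) : Prop :=
  exists i, stabilises step (add_grain c i) c'.

(* Recurrent state of the finite Markov chain on stable configurations:
   every state reachable from c leads back to c. *)
Definition recurrent n (step : relation (config n)) (c : config n) : Prop :=
  stable c /\
  forall c', clos_refl_trans _ (chain step) c c' ->
             clos_refl_trans _ (chain step) c' c.

Definition ASM_recurrent n (c : config n) := recurrent (@asm_step n) c.
Definition SSM_recurrent n (c : config n) := recurrent (@ssm_step n) c.

Definition cwdist n (a b : 'I_n) : nat := (b + n - a) %% n.

(* k lies in the open clockwise interval (i,j); (i,i) = [n] \ {i}. *)
Definition in_open_interval n (i j k : 'I_n) : Prop :=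
  if i == j then k != i else (0 < cwdist i k) && (cwdist i k < cwdist i j).

Definition all_ones n : config n := [ffun _ => 1].

(* Main.v *)
Require Import Defs.
From mathcomp Require Import all_boot.
From Stdlib Require Import Relations.
From mathcomp Require Import zify.
Set Implicit Arguments. Unset Strict Implicit. Unset Printing Implicit Defensive.

Lemma ord_gt0 n (i : 'I_n) : 0 < n.
Proof. exact: (leq_ltn_trans (leq0n i) (ltn_ord i)). Qed.

Lemma val_ordS n (i : 'I_n) : nat_of_ord (ordS i) = if i.+1 == n then 0 else i.+1.
Proof.
rewrite /=; have := ltn_ord i; case: eqP => [->|ne] lt; first by rewrite modnn.
by rewrite modn_small //; lia.
Qed.

Lemma val_ord_pred n (i : 'I_n) : nat_of_ord (ord_pred i) = if nat_of_ord i == 0 then n.-1 else (nat_of_ord i).-1.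
Proof.
rewrite /=; have := ltn_ord i; case: eqP => [->|ne] lt.
  by rewrite add0n modn_small //; lia.
have -> : (i + n).-1 = i.-1 + n by lia.
by rewrite modnDr modn_small //; lia.
Qed.

Lemma Sneq n (hn : 2 < n) (i : 'I_n) : (ordS i == i) = false.
Proof. apply/eqP=> /(congr1 (@nat_of_ord n)); rewrite val_ordS; have := ltn_ord i; case: eqP; lia. Qed.
Lemma Pneq n (hn : 2 < n) (i : 'I_n) : (ord_pred i == i) = false.
Proof. apply/eqP=> /(congr1 (@nat_of_ord n)); rewrite val_ord_pred; have := ltn_ord i; case: eqP; lia. Qed.
Lemma SPneq n (hn : 2 < n) (i : 'I_n) : (ordS i == ord_pred i) = false.
Proof. apply/eqP=> /(congr1 (@nat_of_ord n)); rewrite val_ord_pred val_ordS; have := ltn_ord i. case: (i.+1 =P n); case: (nat_of_ord i =P 0). all: lia. Qed.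
Lemma PSneq n (hn : 2 < n) (i : 'I_n) : (ord_pred i == ordS i) = false.
Proof. by rewrite eq_sym SPneq. Qed.
Lemma Sneq' n (hn : 2 < n) (i : 'I_n) : (i == ordS i) = false.
Proof. by rewrite eq_sym Sneq. Qed.
Lemma Pneq' n (hn : 2 < n) (i : 'I_n) : (i == ord_pred i) = false.
Proof. by rewrite eq_sym Pneq. Qed.
Lemma eqPl n (a b : 'I_n) : (ord_pred a == b) = (a == ordS b).
Proof. by apply/eqP/eqP => [<-|->]; rewrite ?ord_predK ?ordSK. Qed.
Lemma eqSl n (a b : 'I_n) : (ordS a == b) = (a == ord_pred b).
Proof. by apply/eqP/eqP => [<-|->]; rewrite ?ord_predK ?ordSK. Qed.

Definition sh n (i : 'I_n) (d : nat) : 'I_n := Ordinal (ltn_pmod (i + d) (ord_gt0 i)).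

Lemma sh_val n (i : 'I_n) d : nat_of_ord (sh i d) = (i + d) %% n.
Proof. by []. Qed.

Lemma shS n (i : 'I_n) d : ordS (sh i d) = sh i d.+1.
Proof. by apply: val_inj; rewrite /= -addn1 modnDml addn1 addnS. Qed.

Lemma shP n (i : 'I_n) d : ord_pred (sh i d.+1) = sh i d.
Proof. by rewrite -shS ordSK. Qed.

Lemma sh0 n (i : 'I_n) : sh i 0 = i.
Proof. by apply: val_inj; rewrite /= addn0 modn_small. Qed.

Lemma sh_add n (i : 'I_n) a b : sh (sh i a) b = sh i (a + b).
Proof. by apply: val_inj; rewrite /= modnDml addnA. Qed.

Lemma shn n (i : 'I_n) d : sh i (d + n) = sh i d.
Proof. by apply: val_inj; rewrite /= addnA modnDr. Qed.

Lemma sh_mod n (i : 'I_n) d : sh i (d %% n) = sh i d.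
Proof. by apply: val_inj; rewrite /= modnDmr. Qed.

Lemma cw_sh n (i : 'I_n) d : cwdist i (sh i d) = d %% n.
Proof.
rewrite /cwdist /= -addnBA; last exact: ltnW.
rewrite modnDml; have -> : i + d + (n - i) = d + n by have := ltn_ord i; lia.
by rewrite modnDr.
Qed.

Lemma sh_cw n (i j : 'I_n) : sh i (cwdist i j) = j.
Proof.
apply: val_inj; rewrite /= /cwdist modnDmr.
have -> : i + (j + n - i) = j + n by have := ltn_ord i; lia.
by rewrite modnDr modn_small.
Qed.

Lemma cw_lt n (i j : 'I_n) : cwdist i j < n.
Proof. exact: ltn_pmod (ord_gt0 i). Qed.

Lemma sh_inj n (i : 'I_n) d1 d2 : d1 < n -> d2 < n -> (sh i d1 == sh i d2) = (d1 == d2).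
Proof.
move=> h1 h2; apply/eqP/eqP => [e|->] //.
by move: (cw_sh i d1) (cw_sh i d2); rewrite e !modn_small // => -> .
Qed.

Lemma pred_sh n (i : 'I_n) : ord_pred i = sh i n.-1.
Proof.
have := ord_gt0 i => h.
rewrite -shP; congr ord_pred; apply: val_inj; rewrite /= prednK // modnDr modn_small //.
Qed.

Lemma S_sh n (i : 'I_n) : ordS i = sh i 1.
Proof. by rewrite -{1}(sh0 i) shS. Qed.

Definition cmax n : config n := [ffun _ => 2].
Notation crt R := (clos_refl_trans _ R).

Lemma sum_ind n (i : 'I_n) : \sum_(j < n) (j == i : nat) = 1.
Proof. by rewrite (bigD1 i) //= eqxx big1 // => j /negbTE ->. Qed.

Lemma raise n (step : relation (config n)) (s t : config n) :
  stable t -> (forall j, s j <= t j) -> crt (chain step) s t.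
Proof.
move=> st; move e: (\sum_j (t j - s j)) => m; elim: m s e => [|m IH] s e le.
  have -> : s = t; last exact: rt_refl.
  apply/ffunP => j; move/eqP: e; rewrite sum_nat_eq0 => /forallP /(_ j) /eqP.
  by move/eqP; rewrite subn_eq0 => h; apply/eqP; rewrite eqn_leq h le.
case: (boolP [exists j, s j < t j]) => [/existsP [i lti]|].
  apply: (rt_trans _ _ _ (add_grain s i)).
    apply: rt_step; exists i; split; first exact: rt_refl.
    move=> j; rewrite ffunE; have := st j; have := le j; rewrite /deg_W.
    case: eqP => [->|] /=; lia.
  apply: IH; last by move=> j; rewrite ffunE; case: eqP => [->|]; have := le j => /=; lia.
  apply/eqP; rewrite -eqSS -e -addn1 -(sum_ind i) -big_split /=; apply/eqP/eq_bigr => j _.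
  by rewrite ffunE; case: eqP => [->|] /=; have := le j; lia.
rewrite negb_exists => /forallP nlt.
have : \sum_j (t j - s j) = 0 by apply: big1 => j _; have := nlt j; have := le j; lia.
by rewrite e.
Qed.

Lemma crt_stable n (step : relation (config n)) c c' :
  stable c -> crt (chain step) c c' -> stable c'.
Proof.
move=> sc h; elim: h sc => //; first by move=> x y [i [_ ?]].
by move=> x y z _ IH1 _ IH2 /IH1 /IH2.
Qed.

Lemma cmax_stable n : stable (cmax n).
Proof. by move=> j; rewrite ffunE. Qed.

Lemma rec_iff n (step : relation (config n)) c :
  recurrent step c <-> stable c /\ crt (chain step) (cmax n) c.
Proof.
split=> [[sc h]|[sc h]].
  split=> //; apply: h; apply: raise; first exact: cmax_stable.
  by move=> j; rewrite ffunE; have := sc j; rewrite /deg_W; lia.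
split=> // c' hc'.
apply: (rt_trans _ _ _ (cmax n)) => //; apply: raise; first exact: cmax_stable.
by move=> j; rewrite ffunE; have := crt_stable sc hc' j; rewrite /deg_W; lia.
Qed.

Lemma eqSr n (a b : 'I_n) : (a == ord_pred b) = (ordS a == b).
Proof. by rewrite eq_sym eqPl eq_sym. Qed.
Lemma SSneq n (hn : 2 < n) (i : 'I_n) : (ordS (ordS i) == i) = false.
Proof. apply/eqP=> /(congr1 (@nat_of_ord n)); rewrite (val_ordS (ordS i)); have := val_ordS i.
have := ltn_ord i; case: ifP => /eqP h1; case: ifP => /eqP h2; lia. Qed.
Lemma SSneq' n (hn : 2 < n) (i : 'I_n) : (i == ordS (ordS i)) = false.
Proof. by rewrite eq_sym SSneq. Qed.

Ltac nrm hn := do 3 rewrite ?ord_predK ?ordSK ?eqxx ?eqPl ?eqSr ?(inj_eq (@ordS_inj _)) ?(Sneq hn) ?(Sneq' hn) ?(SSneq hn) ?(SSneq' hn) ?ord_predK ?ordSK ?eqxx /=.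

Lemma toppleE n (c : config n) i bl br bs j : topple c i bl br bs j =
  c j - (if j == i then bl+br+bs else 0) + ((j == ord_pred i) && bl) + ((j == ordS i) && br).
Proof. by rewrite ffunE. Qed.

Definition in_o n (o : 'I_n -> bool) k : nat := o (ord_pred k) + ~~ o k.
Definition goodS n (c : config n) := exists o : 'I_n -> bool, forall k, in_o o k <= c k.
Definition goodA n (c : config n) :=
  exists o : 'I_n -> bool, (exists k, o k) /\ (exists k, ~~ o k) /\ forall k, in_o o k <= c k.

Definition upd n (o : 'I_n -> bool) i (bl br : bool) := fun k =>
  if (k == ord_pred i) && bl then false else if (k == i) && br then true else o k.

Lemma upd_ok n (hn : 2 < n) (c : config n) i bl br bs o : 3 <= c i ->
  (forall k, in_o o k <= c k) -> forall k, in_o (upd o i bl br) k <= topple c i bl br bs k.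
Proof.
move=> ci h k; have := h k; rewrite /in_o /upd toppleE.
case: (eqVneq k i) => [->|ki]; first by nrm hn; case: bl; case: br; case: bs; case: (o _); case: (o _) => /=; lia.
case: (eqVneq k (ord_pred i)) => [->|kp].
  nrm hn; have := h (ord_pred i); rewrite /in_o; nrm hn.
  by case: bl; case: br; case: (o _); case: (o _) => /=; lia.
case: (eqVneq k (ordS i)) => [->|ks].
  nrm hn.
  by case: bl; case: br; case: (o _); case: (o _) => /=; lia.
nrm hn; rewrite (negbTE ki) (negbTE ks) /=.
by case: bl; case: br; case: (o _); case: (o _) => /=; lia.
Qed.

Lemma goodS_add n (c : config n) i : goodS c -> goodS (add_grain c i).
Proof. by case=> o h; exists o => k; rewrite ffunE; apply: leq_trans (h k) _; apply: leq_addr. Qed.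

Lemma goodA_add n (c : config n) i : goodA c -> goodA (add_grain c i).
Proof.
case=> o [h1 [h2 h]]; exists o; split => //; split => // k.
by rewrite ffunE; apply: leq_trans (h k) _; apply: leq_addr.
Qed.

Lemma goodS_step n (hn : 2 < n) (c c' : config n) : ssm_step c c' -> goodS c -> goodS c'.
Proof. by case=> i [bl [br [bs [ci ->]]]] [o h]; exists (upd o i bl br); apply: upd_ok. Qed.

Lemma goodA_step n (hn : 2 < n) (c c' : config n) : asm_step c c' -> goodA c -> goodA c'.
Proof.
case=> i [ci ->] [o [_ [_ h]]]; exists (upd o i true true); split; last split.
- by exists i; rewrite /upd; nrm hn.
- by exists (ord_pred i); rewrite /upd; nrm hn.
- exact: upd_ok.
Qed.

Lemma inv_crt T (R : relation T) (P : T -> Prop) x y :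
  (forall x y, R x y -> P x -> P y) -> clos_refl_trans _ R x y -> P x -> P y.
Proof. move=> hR h; elim: h; [exact: hR | by [] | by move=> ? ? ? _ h1 _ h2 /h1 /h2]. Qed.

Lemma goodS_reach n (hn : 2 < n) (c : config n) :
  crt (chain (@ssm_step n)) (cmax n) c -> goodS c.
Proof.
move=> h; apply: (inv_crt _ h).
  move=> x y [i [hxy _]] gx; apply: (inv_crt _ hxy); last exact: goodS_add.
  by move=> ? ?; apply: goodS_step.
by exists (fun _ => true) => k; rewrite /in_o ffunE.
Qed.

Lemma goodA_reach n (hn : 2 < n) (c : config n) :
  crt (chain (@asm_step n)) (cmax n) c -> goodA c.
Proof.
move=> h; apply: (inv_crt _ h).
  move=> x y [i [hxy _]] gx; apply: (inv_crt _ hxy); last exact: goodA_add.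
  by move=> ? ?; apply: goodA_step.
have n0 : 0 < n by lia.
exists (fun k : 'I_n => k == Ordinal n0); split; first by exists (Ordinal n0).
split; last by move=> k; rewrite /in_o ffunE; case: (_ == _); case: (_ == _).
have n1 : 1 < n by lia.
by exists (Ordinal n1).
Qed.

Lemma trans_nat (f : nat -> bool) m : f 0 -> ~~ f m -> exists2 d, d < m & f d && ~~ f d.+1.
Proof.
elim: m => [->//|m IH] f0 fm; case: (boolP (f m)) => [fm'|/IH [//|d dm hd]].
  by exists m => //; rewrite fm'.
by exists d => //; lia.
Qed.

Lemma goodA_two n (c : config n) : stable c -> goodA c -> exists k, c k = 2.
Proof.
move=> st [o [[a oa] [[b ob] h]]].
have f0 : (fun d => o (sh a d)) 0 by rewrite /= sh0.
have fm : ~~ (fun d => o (sh a d)) (cwdist a b) by rewrite /= sh_cw.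
have [d _ /andP [od od']] := @trans_nat (fun d => o (sh a d)) _ f0 fm.
exists (sh a d.+1); have := h (sh a d.+1); have := st (sh a d.+1).
rewrite /in_o shP od (negbTE od') /deg_W; lia.
Qed.

Definition cond1 n (c : config n) := forall i j : 'I_n, c i = 0 -> c j = 0 ->
        exists k : 'I_n, in_open_interval i j k /\ c k = 2.

Lemma goodS_cond1 n (c : config n) : stable c -> goodS c -> cond1 c.
Proof.
move=> st [o h] i j ci cj.
have hi := h i; have hj := h j; rewrite /in_o ci cj in hi hj.
move: hi hj; case oi: (o i); case opi: (o (ord_pred i)); case opj: (o (ord_pred j)) => //= _ _.
have key : forall m, ord_pred j = sh i m -> m < n -> exists2 d, d < m & o (sh i d) && ~~ o (sh i d.+1).
  by move=> m e _; apply: trans_nat; rewrite ?sh0 // -e opj.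
have fin : forall d, o (sh i d) -> ~~ o (sh i d.+1) -> c (sh i d.+1) = 2.
  move=> d h1 h2; have := h (sh i d.+1); have := st (sh i d.+1).
  by rewrite /in_o shP h1 (negbTE h2) /deg_W; lia.
have n0 := ord_gt0 i.
case: (eqVneq i j) => [eij|nij].
  subst j; have [|//|d dm /andP [h1 h2]] := key n.-1; first by rewrite pred_sh.
    lia.
  exists (sh i d.+1); split; last exact: fin.
  rewrite /in_open_interval eqxx -{2}(sh0 i) sh_inj //; lia.
have cw0 : 0 < cwdist i j.
  rewrite lt0n; apply/negP => /eqP e; move: nij; by rewrite -(sh_cw i j) e sh0 eqxx.
have [||d dm /andP [h1 h2]] := key (cwdist i j).-1.
- by rewrite -{1}(sh_cw i j) -(prednK cw0) shP.
- by have := cw_lt i j; lia.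
exists (sh i d.+1); split; last exact: fin.
rewrite /in_open_interval (negbTE nij) cw_sh modn_small; last by have := cw_lt i j; lia.
by apply/andP; split; lia.
Qed.

Lemma sh_pred n (v : 'I_n) d : sh (ord_pred v) d.+1 = sh v d.
Proof.
have n0 := ord_gt0 v.
rewrite pred_sh sh_add; have -> : n.-1 + d.+1 = d + n by lia.
by rewrite shn.
Qed.

Definition scan n (c : config n) (k : 'I_n) : bool :=
  [exists d : 'I_n, [&& 0 < d, c (sh k d) == 2 &
     [forall d' : 'I_n, (0 < d' < d) ==> (c (sh k d') == 1)]]].

Lemma cond1_goodS n (hn : 2 < n) (c : config n) : stable c -> cond1 c -> goodS c.
Proof.
move=> st cc; exists (scan c) => v; rewrite /in_o.
have := st v; rewrite /deg_W.
case cv: (c v) => [|[|[|m]]] // _; last by case: (scan _); case: (scan _).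
-
  have sp0 : ~~ scan c (ord_pred v).
    apply/negP; rewrite /scan => /existsP [[[|e] he] /and3P [_ /eqP c2 /forallP hf]] //.
    rewrite sh_pred in c2; case: e he c2 hf => [|e] he c2 hf; first by rewrite sh0 cv in c2.
    have h1 : 1 < n by lia.
    have := hf (Ordinal h1); rewrite /= -[1]/(0.+1) sh_pred sh0 cv; lia.
  rewrite (negbTE sp0); suff -> : scan c v by [].
  pose Q e := (0 < e < n) && (c (sh v e) != 1).
  have exQ : exists e, Q e.
    have [k [kin ck]] := cc v v cv cv.
    exists (cwdist v k); rewrite /Q sh_cw ck cw_lt !andbT /=.
    rewrite lt0n; apply/negP => /eqP e; move: kin; rewrite /in_open_interval eqxx.
    by rewrite -(sh_cw v k) e sh0 eqxx.
  case: (ex_minnP exQ) => e0 /andP [/andP [e0p e0n] ce0] emin.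
  have c2 : c (sh v e0) = 2.
    have := st (sh v e0); rewrite /deg_W; move: ce0.
    case ce: (c (sh v e0)) => [|[|[|?]]] // _ _.
    have w_ne : v != sh v e0 by rewrite -{1}(sh0 v) sh_inj //; lia.
    have [k [kin ck]] := cc v (sh v e0) cv ce.
    move: kin; rewrite /in_open_interval (negbTE w_ne) cw_sh modn_small // => /andP [k0 k1].
    have := emin (cwdist v k); rewrite /Q sh_cw ck k0 cw_lt /= => /(_ isT); lia.
  rewrite /scan; apply/existsP; exists (Ordinal e0n); rewrite /= e0p c2 eqxx /=.
  apply/forallP => d'; apply/implyP => /andP [d0 d1].
  have := emin d'; rewrite /Q d0 ltn_ord /=; case: eqP => // _ /(_ isT); lia.
-
  case sp: (scan c (ord_pred v)); last by case: (scan _).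
  suff -> : scan c v by [].
  move: sp; rewrite /scan => /existsP [[[|[|e]] he] /and3P [_ /eqP c2 /forallP hf]] //.
    by rewrite -[1]/(0.+1) sh_pred sh0 cv in c2.
  rewrite sh_pred in c2; have he' : e.+1 < n by lia.
  rewrite /scan; apply/existsP; exists (Ordinal he'); rewrite /= c2 eqxx /=.
  apply/forallP => d'; apply/implyP => /andP [d0 d1].
  have hd : d'.+1 < n by have := ltn_ord d'; lia.
  have := hf (Ordinal hd); rewrite /= sh_pred ltnS d1; apply.
Qed.

Definition tp n (c : config n) i := topple c i true true true.

Fixpoint legal n (c : config n) (L : seq 'I_n) : Prop :=
  match L with [::] => True | i :: L' => 3 <= c i /\ legal (tp c i) L' end.

Lemma legal_crt n (c : config n) L : legal c L -> crt (@asm_step n) c (foldl (@tp n) c L).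
Proof.
elim: L c => [|i L IH] c /=; first by move=> _; apply: rt_refl.
case=> ci hl; apply: rt_trans (IH _ hl); apply: rt_step; by exists i.
Qed.

Lemma tp_add n (hn : 2 < n) (c : config n) i (h : 3 <= c i) j :
  tp c i j + 3 * (j == i) = c j + (j == ord_pred i) + (j == ordS i).
Proof.
rewrite /tp toppleE; case: (eqVneq j i) => [->|ji]; nrm hn; first by lia.
by rewrite !andbT; lia.
Qed.

Lemma fold_add n (hn : 2 < n) (c : config n) L : legal c L -> forall j,
  foldl (@tp n) c L j + 3 * count_mem j L =
  c j + count (fun i => j == ord_pred i) L + count (fun i => j == ordS i) L.
Proof.
elim: L c => [|i L IH] c /=; first by move=> _ j; rewrite !addn0.
case=> ci hl j; have := IH _ hl j; have := tp_add hn ci j; rewrite (eq_sym i j). set a : nat := tp c i j; set b : nat := (foldl _ _ _ : config n) j; set e1 : nat := nat_of_bool (j == i); set cm : nat := count_mem j L; lia.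
Qed.

Lemma legal_of n (hn : 2 < n) (c : config n) L :
  (forall L1 x L2, L = L1 ++ x :: L2 -> 3 + 3 * count_mem x L1 <=
     c x + count (fun i => x == ord_pred i) L1 + count (fun i => x == ordS i) L1) ->
  legal c L.
Proof.
elim: L c => [|i L IH] c h //=.
have ci : 3 <= c i by have := h [::] i L erefl; rewrite /=; lia.
split => //; apply: IH => L1 x L2 e.
have := h (i :: L1) x L2; rewrite e => /(_ erefl) /=.
have := tp_add hn ci x; rewrite (eq_sym i x); lia.
Qed.

Lemma cascade n (hn : 2 < n) (v : 'I_n) :
  chain (@asm_step n) (cmax n) [ffun j => 1 + (j == v)].
Proof.
pose L := map (sh v) (iota 0 n).
have shinj : {in iota 0 n &, injective (sh v)}.
  by move=> a b; rewrite !mem_iota /= => ha hb /eqP; rewrite sh_inj // => /eqP.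
have uL : uniq L by rewrite map_inj_in_uniq // iota_uniq.
have inL : forall j, j \in L.
  move=> j; apply/mapP; exists (cwdist v j); last by rewrite sh_cw.
  by rewrite mem_iota cw_lt.
have cL : forall j, count_mem j L = 1 by move=> j; rewrite count_uniq_mem // inL.
pose X0 := add_grain (cmax n) v.
have lg : legal X0 L.
  apply: legal_of => // L1 x L2 e.
  have szL : size L = n by rewrite size_map size_iota.
  have kn : size L1 < n.
    have := congr1 size e; rewrite size_cat /= szL; lia.
  have eL1 : L1 = map (sh v) (iota 0 (size L1)).
    have := take_size_cat (x :: L2) (erefl (size L1)); rewrite -e /L -map_take take_iota.
    by rewrite (minn_idPl (ltnW kn)) => ->.
  have ex : x = sh v (size L1).
    have := nth_cat v L1 (x :: L2) (size L1); rewrite ltnn subnn /= -e /L.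
    by rewrite (nth_map 0) ?size_iota // nth_iota.
  move: (size L1) kn eL1 ex => k kn -> ->.
  have -> : count_mem (sh v k) (map (sh v) (iota 0 k)) = 0.
    apply/count_memPn/mapP => [[m]]; rewrite mem_iota /= => mk /eqP.
    by rewrite sh_inj //; lia.
  rewrite /X0 !ffunE.
  case: k kn => [|k] kn; first by rewrite sh0 eqxx.
  have : 0 < count (fun i => sh v k.+1 == ordS i) (map (sh v) (iota 0 k.+1)).
    rewrite -has_count; apply/hasP; exists (sh v k); last by rewrite shS.
    by apply/mapP; exists k => //; rewrite mem_iota; lia.
  move=> h; set q : nat := count (fun i => _ == ordS i) _ in h *; set b : nat := nat_of_bool _; lia.
exists v; split.
  have := fold_add hn lg.
  set F := foldl _ _ _ => hF.
  have -> : [ffun j => 1 + (j == v)] = F; last exact: legal_crt.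
  apply/ffunP => j; have := hF j; rewrite cL.
  rewrite (eq_count (a1 := fun i => j == ord_pred i) (a2 := pred1 (ordS j))); last by move=> i; rewrite /= eqSr eq_sym.
  rewrite (eq_count (a1 := fun i => j == ordS i) (a2 := pred1 (ord_pred j))); last by move=> i; rewrite /= -eqPl eq_sym.
  rewrite !cL /X0 !ffunE; set a : nat := F j; set b : nat := (j == v : nat); lia.
move=> j; rewrite ffunE /deg_W; case: (_ == _); lia.
Qed.

Lemma add_grainE n (c : config n) i j : add_grain c i j = c j + (j == i).
Proof. by rewrite ffunE. Qed.

Definition fw (x : nat) : nat := if x == 0 then 5 else if x == 1 then 2 else 0.
Definition phi n (c : config n) := \sum_(j < n) fw (c j).

Lemma phi_lt n (t t' : config n) (A B : 'I_n -> nat) :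
  (forall j, fw (t' j) + A j <= fw (t j) + B j) -> \sum_j B j < \sum_j A j -> phi t' < phi t.
Proof.
move=> h hs; have : \sum_j (fw (t' j) + A j) <= \sum_j (fw (t j) + B j) by apply: leq_sum.
rewrite !big_split /= => h2.
have : \sum_j fw (t' j) + \sum_j A j < \sum_j fw (t j) + \sum_j A j.
  by apply: leq_ltn_trans h2 _; rewrite ltn_add2l.
by rewrite ltn_add2r.
Qed.

Lemma in_le2 n (o : 'I_n -> bool) j : in_o o j <= 2.
Proof. by rewrite /in_o; case: (o _); case: (o _). Qed.

Lemma stable_le2 n (c : config n) j : stable c -> c j <= 2.
Proof. by move=> st; have := st j; rewrite /deg_W; lia. Qed.

Lemma zero_src n (o : 'I_n -> bool) (t : config n) z :
  (forall k, in_o o k <= t k) -> t z = 0 -> o (ord_pred z) = false /\ o z = true.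
Proof. by move=> h tz; have := h z; rewrite /in_o tz; case: (o _); case: (o _). Qed.

Definition mvc n (t : config n) z : config n :=
  [ffun j => if j == z then 2 else if (j == ord_pred z) || (j == ordS z) then 1 else t j].

Lemma mvc_ok n (hn : 2 < n) (t : config n) (o : 'I_n -> bool) z :
  stable t -> (forall k, in_o o k <= t k) -> t z = 0 -> t (ord_pred z) = 2 -> t (ordS z) = 2 ->
  [/\ stable (mvc t z), goodS (mvc t z), mvc t z z = 2, phi (mvc t z) < phi t &
      chain (@asm_step n) (mvc t z) t].
Proof.
move=> st h tz tpz tsz.
have Ez : mvc t z z = 2 by rewrite ffunE eqxx.
have Ep : mvc t z (ord_pred z) = 1 by rewrite ffunE; nrm hn.
have Es : mvc t z (ordS z) = 1 by rewrite ffunE; nrm hn.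
have Eo : forall j, j != z -> j != ord_pred z -> j != ordS z -> mvc t z j = t j.
  by move=> j h1 h2 h3; rewrite ffunE (negbTE h1) (negbTE h2) (negbTE h3).
have cases : forall (P : 'I_n -> Prop), P z -> P (ord_pred z) -> P (ordS z) ->
    (forall j, j != z -> j != ord_pred z -> j != ordS z -> P j) -> forall j, P j.
  move=> P p1 p2 p3 p4 j.
  case: (eqVneq j z) => [->//|j1]; case: (eqVneq j (ord_pred z)) => [->//|j2].
  by case: (eqVneq j (ordS z)) => [->//|j3]; apply: p4.
split.
- apply: (cases (fun j => mvc t z j < deg_W)); rewrite /deg_W ?Ez ?Ep ?Es // => j j1 j2 j3; rewrite Eo //; exact: st.
- exists (fun k => if k == ord_pred z then true else if k == z then false else o k).
  apply: (cases (fun j => in_o _ j <= mvc t z j)); rewrite ?Ez ?Ep ?Es.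
  + exact: in_le2.
  + by rewrite /in_o; nrm hn; case: (o _).
  + by rewrite /in_o; nrm hn; case: (o _).
  + move=> j j1 j2 j3; rewrite /in_o Eo // (inj_eq (@ord_pred_inj _)) eqPl (negbTE j1) (negbTE j2) (negbTE j3); exact: h.
- exact: Ez.
- apply: (@phi_lt _ _ _ (fun j => 5 * (j == z)) (fun j => 2 * (j == ord_pred z) + 2 * (j == ordS z))).
    apply: (cases (fun j => fw (mvc t z j) + _ <= fw (t j) + _)); rewrite ?Ez ?Ep ?Es ?tz ?tpz ?tsz; nrm hn; rewrite ?(Pneq hn) ?(Pneq' hn) //.
    by move=> j j1 j2 j3; rewrite Eo // (negbTE j1) (negbTE j2) (negbTE j3) /= !addn0.
  by rewrite big_split /= -!big_distrr /= !sum_ind.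
- exists z; split; last exact: st.
  have lg : legal (add_grain (mvc t z) z) [:: z].
    by rewrite /= ffunE eqxx Ez; split.
  have := fold_add hn lg; rewrite /= => hf.
  suff E : tp (add_grain (mvc t z) z) z = t by have := legal_crt lg; rewrite /= E.
  apply/ffunP; apply: (cases (fun j => _ = t j)).
  + have := hf z; rewrite add_grainE eqxx Ez tz; nrm hn; rewrite ?(Pneq hn) ?(Pneq' hn) /=.
    set a : nat := tp _ _ _; lia.
  + have := hf (ord_pred z); rewrite add_grainE Ep tpz; nrm hn; rewrite ?(Pneq hn) ?(Pneq' hn) /=.
    set a : nat := tp _ _ _; lia.
  + have := hf (ordS z); rewrite add_grainE Es tsz; nrm hn; rewrite ?(Pneq hn) ?(Pneq' hn) /=.
    set a : nat := tp _ _ _; lia.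
  + move=> j j1 j2 j3; have := hf j; rewrite add_grainE Eo // (negbTE j1) (negbTE j2) (negbTE j3) /=.
    set a : nat := tp _ _ _; rewrite eq_sym (negbTE j1); lia.
Qed.

Lemma fw_sub x (a b : bool) : x <= 2 -> a + b <= x -> fw (x - a - b) <= fw x + a * 3 + b * 3.
Proof. by case: x => [|[|[|x]]] //; case: a; case: b. Qed.

Lemma cases2 n (z w : 'I_n) (P : 'I_n -> Prop) : P z -> P w ->
    (forall j, j != z -> j != w -> P j) -> forall j, P j.
Proof.
move=> p1 p2 p3 j; case: (eqVneq j z) => [->//|j1].
by case: (eqVneq j w) => [->//|j2]; apply: p3.
Qed.

Definition mvb n (t : config n) z : config n :=
  [ffun j => if j == z then 2 else if j == ord_pred z then 2
             else t j - (j == ord_pred (ord_pred z)) - (j == ordS z)].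

Lemma mvb_ok n (hn : 2 < n) (t : config n) (o : 'I_n -> bool) z :
  stable t -> (forall k, in_o o k <= t k) -> t z = 0 -> t (ord_pred z) = 1 ->
  [/\ stable (mvb t z), goodS (mvb t z), mvb t z z = 2, phi (mvb t z) < phi t &
      chain (@asm_step n) (mvb t z) t].
Proof.
move=> st h tz tpz.
have [opz oz] := zero_src h tz.
have oppz : o (ord_pred (ord_pred z)) = false.
  by have := h (ord_pred z); rewrite /in_o tpz opz; case: (o _).
have bnd : forall j, (j == ord_pred (ord_pred z)) + (j == ordS z) <= t j.
  move=> j; have := h j; rewrite /in_o.
  case: (eqVneq j (ordS z)) => [->|js].
    rewrite ordSK oz /=; case: (eqVneq (ordS z) (ord_pred (ord_pred z))) => [e|ne] /=.
      have -> : o (ordS z) = false by rewrite e.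
      by set a : nat := t _; lia.
    by case: (o _) => /=; set a : nat := t _; lia.
  rewrite addn0.
  case: (eqVneq j (ord_pred (ord_pred z))) => [->|jp] /=; first rewrite oppz.
    by case: (o _) => /=; set a : nat := t _; lia.
  by lia.
have Ez : mvb t z z = 2 by rewrite ffunE eqxx.
have Ep : mvb t z (ord_pred z) = 2 by rewrite ffunE (Pneq hn) eqxx.
have Eo : forall j, j != z -> j != ord_pred z ->
    mvb t z j = t j - (j == ord_pred (ord_pred z)) - (j == ordS z).
  by move=> j j1 j2; rewrite ffunE (negbTE j1) (negbTE j2).
split.
- apply: (@cases2 _ z (ord_pred z) (fun j => mvb t z j < deg_W)); rewrite ?Ez ?Ep // => j j1 j2.
  by rewrite Eo //; have := st j; rewrite /deg_W; set a : nat := t j; lia.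
- exists (fun k => if k == ord_pred (ord_pred z) then true else if k == z then false else o k).
  apply: (@cases2 _ z (ord_pred z) (fun j => in_o _ j <= mvb t z j)); rewrite ?Ez ?Ep; try exact: in_le2.
  move=> j j1 j2; rewrite /in_o Eo // (inj_eq (@ord_pred_inj _)) eqPl (negbTE j1) (negbTE j2).
  case: (eqVneq j (ordS z)) => [->|js] /=.
    have := h (ordS z); rewrite /in_o ordSK oz.
    case: (eqVneq (ordS z) (ord_pred (ord_pred z))) => [e|ne] /=.
      by have -> : o (ordS z) = false by rewrite e.
    by case: (o _) => /=; set a : nat := t _; lia.
  case: (eqVneq j (ord_pred (ord_pred z))) => [->|jp] /=.
    have := h (ord_pred (ord_pred z)); rewrite /in_o oppz /=.
    by case: (o _) => /=; set a : nat := t _; lia.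
  by rewrite !subn0; apply: h.
- exact: Ez.
- apply: (@phi_lt _ _ _ (fun j => (j == z) * 5 + (j == ord_pred z) * 2)
     (fun j => (j == ord_pred (ord_pred z)) * 3 + (j == ordS z) * 3)).
    apply: (@cases2 _ z (ord_pred z) (fun j => fw (mvb t z j) + _ <= fw (t j) + _)).
    + by rewrite Ez tz; nrm hn; rewrite ?(Pneq hn) ?(Pneq' hn).
    + by rewrite Ep tpz; nrm hn; rewrite ?(Pneq hn) ?(Pneq' hn).
    + move=> j j1 j2; rewrite Eo // (negbTE j1) (negbTE j2) /= addn0 addnA.
      apply: fw_sub; [exact: stable_le2 | exact: bnd].
  by rewrite !big_split -!big_distrl !sum_ind.
- exists (ord_pred z); split; last exact: st.
  have c1 : 3 <= add_grain (mvb t z) (ord_pred z) (ord_pred z) by rewrite add_grainE Ep eqxx.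
  have lg : legal (add_grain (mvb t z) (ord_pred z)) [:: ord_pred z; z].
    rewrite /=; split => //; split => //.
    have := tp_add hn c1 z; rewrite add_grainE Ez; nrm hn; rewrite ?(Pneq hn) ?(Pneq' hn) /=.
    set a : nat := tp _ _ _; lia.
  have := fold_add hn lg; rewrite /= => hf.
  suff E : foldl (@tp n) (add_grain (mvb t z) (ord_pred z)) [:: ord_pred z; z] = t.
    by have := legal_crt lg; rewrite E.
  apply/ffunP; apply: (@cases2 _ z (ord_pred z) (fun j => _ = t j)).
  + have := hf z; rewrite add_grainE Ez tz; nrm hn; rewrite ?(Pneq hn) ?(Pneq' hn) /=.
    set a : nat := tp _ _ _; lia.
  + have := hf (ord_pred z); rewrite add_grainE Ep tpz; nrm hn; rewrite ?(Pneq hn) ?(Pneq' hn) /=.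
    set a : nat := tp _ _ _; lia.
  + move=> j j1 j2; have := hf j; have := bnd j; rewrite add_grainE Eo //.
    rewrite (eq_sym (ord_pred z) j) (eq_sym z j) (negbTE j1) (negbTE j2) /= ord_predK (negbTE j1).
    set a : nat := tp _ _ _; set b : nat := t j; set x : nat := nat_of_bool (j == ord_pred _);
    set y : nat := nat_of_bool (j == ordS z); lia.
Qed.

Definition mvb' n (t : config n) z : config n :=
  [ffun j => if j == z then 2 else if j == ordS z then 2
             else t j - (j == ordS (ordS z)) - (j == ord_pred z)].

Lemma mvb'_ok n (hn : 2 < n) (t : config n) (o : 'I_n -> bool) z :
  stable t -> (forall k, in_o o k <= t k) -> t z = 0 -> t (ordS z) = 1 ->
  [/\ stable (mvb' t z), goodS (mvb' t z), mvb' t z z = 2, phi (mvb' t z) < phi t &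
      chain (@asm_step n) (mvb' t z) t].
Proof.
move=> st h tz tsz.
have [opz oz] := zero_src h tz.
have osz : o (ordS z) = true.
  by have := h (ordS z); rewrite /in_o tsz ordSK oz; case: (o _).
have bnd : forall j, (j == ordS (ordS z)) + (j == ord_pred z) <= t j.
  move=> j; have := h j; rewrite /in_o.
  case: (eqVneq j (ord_pred z)) => [->|jp].
    rewrite opz /=; case: (eqVneq (ord_pred z) (ordS (ordS z))) => [e|ne] /=.
      have -> : o (ord_pred (ord_pred z)) = true by rewrite e ordSK.
      by set a : nat := t _; lia.
    by case: (o _) => /=; set a : nat := t _; lia.
  rewrite addn0.
  case: (eqVneq j (ordS (ordS z))) => [->|js] /=; first rewrite ordSK osz.
    by case: (o _) => /=; set a : nat := t _; lia.
  by lia.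
have Ez : mvb' t z z = 2 by rewrite ffunE eqxx.
have Es : mvb' t z (ordS z) = 2 by rewrite ffunE (Sneq hn) eqxx.
have Eo : forall j, j != z -> j != ordS z ->
    mvb' t z j = t j - (j == ordS (ordS z)) - (j == ord_pred z).
  by move=> j j1 j2; rewrite ffunE (negbTE j1) (negbTE j2).
split.
- apply: (@cases2 _ z (ordS z) (fun j => mvb' t z j < deg_W)); rewrite ?Ez ?Es // => j j1 j2.
  by rewrite Eo //; have := st j; rewrite /deg_W; set a : nat := t j; lia.
- exists (fun k => if k == ordS z then false else if k == ord_pred z then true else o k).
  apply: (@cases2 _ z (ordS z) (fun j => in_o _ j <= mvb' t z j)); rewrite ?Ez ?Es; try exact: in_le2.
  move=> j j1 j2; rewrite /in_o Eo // (inj_eq (@ord_pred_inj _)) eqPl (negbTE j1) (negbTE j2).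
  case: (eqVneq j (ordS (ordS z))) => [->|js] /=.
    have := h (ordS (ordS z)); rewrite /in_o ordSK osz.
    case: (eqVneq (ordS (ordS z)) (ord_pred z)) => [e|ne] /=; first by [].
    by case: (o _) => /=; set a : nat := t _; lia.
  case: (eqVneq j (ord_pred z)) => [->|jp] /=.
    have := h (ord_pred z); rewrite /in_o opz /=.
    by case: (o _) => /=; set a : nat := t _; lia.
  by rewrite !subn0; apply: h.
- exact: Ez.
- apply: (@phi_lt _ _ _ (fun j => (j == z) * 5 + (j == ordS z) * 2)
     (fun j => (j == ordS (ordS z)) * 3 + (j == ord_pred z) * 3)).
    apply: (@cases2 _ z (ordS z) (fun j => fw (mvb' t z j) + _ <= fw (t j) + _)).
    + by rewrite Ez tz; nrm hn; rewrite ?(Pneq hn) ?(Pneq' hn).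
    + by rewrite Es tsz; nrm hn; rewrite ?(Pneq hn) ?(Pneq' hn).
    + move=> j j1 j2; rewrite Eo // (negbTE j1) (negbTE j2) /= addn0 addnA.
      apply: fw_sub; [exact: stable_le2 | exact: bnd].
  by rewrite !big_split -!big_distrl !sum_ind.
- exists (ordS z); split; last exact: st.
  have c1 : 3 <= add_grain (mvb' t z) (ordS z) (ordS z) by rewrite add_grainE Es eqxx.
  have lg : legal (add_grain (mvb' t z) (ordS z)) [:: ordS z; z].
    rewrite /=; split => //; split => //.
    have := tp_add hn c1 z; rewrite add_grainE Ez; nrm hn; rewrite ?(Pneq hn) ?(Pneq' hn) /=.
    set a : nat := tp _ _ _; lia.
  have := fold_add hn lg; rewrite /= => hf.
  suff E : foldl (@tp n) (add_grain (mvb' t z) (ordS z)) [:: ordS z; z] = t.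
    by have := legal_crt lg; rewrite E.
  apply/ffunP; apply: (@cases2 _ z (ordS z) (fun j => _ = t j)).
  + have := hf z; rewrite add_grainE Ez tz; nrm hn; rewrite ?(Pneq hn) ?(Pneq' hn) /=.
    set a : nat := tp _ _ _; lia.
  + have := hf (ordS z); rewrite add_grainE Es tsz; nrm hn; rewrite ?(Pneq hn) ?(Pneq' hn) /=.
    set a : nat := tp _ _ _; lia.
  + move=> j j1 j2; have := hf j; have := bnd j; rewrite add_grainE Eo //.
    rewrite (eq_sym (ordS z) j) (eq_sym z j) (negbTE j1) (negbTE j2) /= ordSK (negbTE j1).
    set a : nat := tp _ _ _; set b : nat := t j; set x : nat := nat_of_bool (j == ordS _);
    set y : nat := nat_of_bool (j == ord_pred z); lia.
Qed.

Lemma reachA n (hn : 2 < n) (t : config n) : stable t -> goodS t -> (exists v, t v = 2) ->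
  crt (chain (@asm_step n)) (cmax n) t.
Proof.
move: (leqnn (phi t).+1); move: {2}(phi t).+1 => m.
elim: m t => [//|m IH] t lt st [o h] [v tv].
case: (boolP [exists z, t z == 0]) => [/existsP [z /eqP tz]|nz].
  have [opz oz] := zero_src h tz.
  have tp1 : 1 <= t (ord_pred z).
    by have := h (ord_pred z); rewrite /in_o opz; case: (o _) => /=; set a : nat := t _; lia.
  have ts1 : 1 <= t (ordS z).
    by have := h (ordS z); rewrite /in_o ordSK oz; case: (o _) => /=; set a : nat := t _; lia.
  case: (eqVneq (t (ord_pred z)) 1) => [tpz|tpz].
    have [s1 g1 e1 l1 c1] := mvb_ok hn st h tz tpz.
    apply: rt_trans (rt_step _ _ _ _ c1); apply: IH s1 g1 _; last by exists z.
    lia.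
  case: (eqVneq (t (ordS z)) 1) => [tsz|tsz].
    have [s1 g1 e1 l1 c1] := mvb'_ok hn st h tz tsz.
    apply: rt_trans (rt_step _ _ _ _ c1); apply: IH s1 g1 _; last by exists z.
    lia.
  have tp2 : t (ord_pred z) = 2.
    by have := stable_le2 (ord_pred z) st; move: tpz tp1; set a := t _; lia.
  have ts2 : t (ordS z) = 2.
    by have := stable_le2 (ordS z) st; move: tsz ts1; set a := t _; lia.
  have [s1 g1 e1 l1 c1] := mvc_ok hn st h tz tp2 ts2.
  apply: rt_trans (rt_step _ _ _ _ c1); apply: IH s1 g1 _; last by exists z.
  lia.
apply: rt_trans (rt_step _ _ _ _ (cascade hn v)) _; apply: raise => // j.
rewrite ffunE; move: nz; rewrite negb_exists => /forallP /(_ j).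
have := stable_le2 j st; case: (eqVneq j v) => [->|jv]; rewrite ?tv //=.
by set a : nat := t j; lia.
Qed.

Lemma crt_sub T (R S : relation T) x y :
  (forall x y, R x y -> S x y) -> clos_refl_trans _ R x y -> clos_refl_trans _ S x y.
Proof.
move=> hRS; elim; [by move=> ? ? /hRS; apply: rt_step | by move=> ?; apply: rt_refl |].
by move=> ? ? ? _ h1 _ h2; apply: rt_trans h1 h2.
Qed.

Lemma chain_sub n (c c' : config n) : chain (@asm_step n) c c' -> chain (@ssm_step n) c c'.
Proof.
case=> i [h st]; exists i; split => //; apply: crt_sub h => x y [j [hj ->]].
by exists j, true, true, true.
Qed.

Lemma reach_ones n (hn : 2 < n) : crt (chain (@ssm_step n)) (cmax n) (all_ones n).
Proof.
have n0 : 0 < n by lia.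
pose k := Ordinal n0.
pose t0 : config n := [ffun j => if j == k then 2 else if j == ordS k then 0 else 1].
have st0 : stable t0 by move=> j; rewrite ffunE /deg_W; case: ifP => _ //; case: ifP.
apply: rt_trans (crt_sub (@chain_sub n) (reachA hn st0 _ _)) _.
- exists (fun j => j != k) => j; rewrite /in_o ffunE.
  case: (eqVneq j k) => [->|jk]; first by rewrite (Pneq hn).
  case: (eqVneq j (ordS k)) => [->|jsk]; first by rewrite ordSK eqxx.
  by case: (_ != _).
- by exists k; rewrite ffunE eqxx.
apply: rt_step; exists k; split; last by move=> j; rewrite ffunE.
apply: rt_step; exists k, false, true, true; split; first by rewrite add_grainE !ffunE !eqxx.
apply/ffunP => j; rewrite toppleE !add_grainE !ffunE.
case: (eqVneq j k) => [->|jk]; first by rewrite (Sneq' hn) andbF.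
case: (eqVneq j (ordS k)) => [->|jsk] //=; by rewrite andbF.
Qed.

Lemma no2_ones n (c : config n) : stable c -> cond1 c -> ~~ [exists v, c v == 2] -> c = all_ones n.
Proof.
move=> st cc; rewrite negb_exists => /forallP n2; apply/ffunP => j; rewrite ffunE.
have := stable_le2 j st; have := n2 j.
case cj: (c j) => [|[|[|?]]] //= _ _.
by have [k [_ /eqP ck]] := cc j j cj cj; move: (n2 k); rewrite ck.
Qed.

Lemma ssm_iff n (hn : 2 < n) (c : config n) : stable c -> (SSM_recurrent c <-> cond1 c).
Proof.
move=> st; rewrite /SSM_recurrent rec_iff; split.
  by case=> _ h; apply: goodS_cond1 => //; apply: goodS_reach.
move=> cc; split => //.
case: (boolP [exists v, c v == 2]) => [/existsP [v /eqP cv]|n2].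
  apply: crt_sub (@chain_sub n) _; apply: reachA => //; first exact: cond1_goodS.
  by exists v.
by rewrite (no2_ones st cc n2); apply: reach_ones.
Qed.

Lemma asm_iff n (hn : 2 < n) (c : config n) : stable c ->
  (ASM_recurrent c <-> SSM_recurrent c /\ exists i, c i = 2).
Proof.
move=> st; rewrite /ASM_recurrent /SSM_recurrent !rec_iff; split.
  case=> _ h; split; first by split => //; apply: crt_sub (@chain_sub n) h.
  by apply: goodA_two => //; apply: goodA_reach.
case=> hs e2; split => //; apply: reachA => //.
apply: cond1_goodS => //; apply/(ssm_iff hn st).
by rewrite /SSM_recurrent rec_iff.
Qed.

Theorem mainTheorem3 (n : nat) (hn : 3 <= n) (c : config n) (hc : stable c) :
  (SSM_recurrent c <->
     (forall i j : 'I_n, c i = 0 -> c j = 0 ->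
        exists k : 'I_n, in_open_interval i j k /\ c k = 2)) /\
  (ASM_recurrent c <-> SSM_recurrent c /\ exists i : 'I_n, c i = 2) /\
  (SSM_recurrent c <-> ASM_recurrent c \/ c = all_ones n).
Proof.
have h1 := ssm_iff hn hc; have h2 := asm_iff hn hc.
split; first exact: h1.
split; first exact: h2.
split.
  move=> hs; case: (boolP [exists v, c v == 2]) => [/existsP [v /eqP cv]|n2].
    by left; apply/h2; split => //; exists v.
  by right; apply: no2_ones => //; apply/h1.
case=> [/h2 [] //|->].
have st1 : stable (all_ones n) by move=> j; rewrite ffunE.
apply/(ssm_iff hn st1) => i j; rewrite ffunE.
by [].
Qed.
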